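(* Let $G$ be a graph with weight function $w:V(G)\to[0,1]$, and let $S$ be an even set in $G$. Let $f:2^S\to\mathbb{R}$ be given by $f(A)=-\alpha_{A,S}(G)$ for $A\subseteq S$. Then $f$ is submodular, i.e. $f(A)+f(B)\ge f(A\cup B)+f(A\cap B)$ for all $A,B\subseteq S$.
   Context: All graphs are finite and simple. Paths are induced paths; length is the number of edges; a path is even if its length is even. An even pair in $G$ is a pair $\{x,y\}$ of vertices such that every induced path in $G$ from $x$ to $y$ is even (in particular $x,y$ are non-adjacent). An even set is a set of vertices every two of which form an even pair (so even sets are independent). For $X\subseteq V(G)$, $w(X)=\sum_{x\in X}w(x)$. For an independent set $S$ and $A\subseteq S$, $\alpha_{A,S}(G)$ denotes the maximum of $w(I)$ over independent sets $I$ of $G$ with $I\cap S=A$. *)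

(* Defs.v *)
From HB Require Import structures.
From mathcomp Require Import all_boot all_order all_algebra.
Set Implicit Arguments. Unset Strict Implicit. Unset Printing Implicit Defensive.
Import Order.TTheory GRing.Theory Num.Theory.

Section Graphs.
Variable T : finType.
Variable e : rel T.

Definition simple_graph : Prop := symmetric e /\ irreflexive e.

(* p is the vertex sequence x :: q of an induced path from x to y:
   distinct vertices, and two vertices of the path are adjacent iff
   they are consecutive on the path. Its length is size q. *)
Definition induced_path (x y : T) (q : seq T) : bool :=
  let p := x :: q in
  [&& last x q == y, uniq p &
      [forall i : 'I_(size p), forall j : 'I_(size p),
         e (nth x p i) (nth x p j) == ((i.+1 == j :> nat) || (j.+1 == i :> nat))]].

Definition even_pair (x y : T) : Prop :=
  forall q : seq T, induced_path x y q -> ~~ odd (size q).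

Definition even_set (S : {set T}) : Prop :=
  forall x y, x \in S -> y \in S -> x != y -> even_pair x y.

Definition stable (I : {set T}) : bool :=
  [forall x in I, forall y in I, ~~ e x y].

Variable R : realFieldType.
Variable w : T -> R.

Definition wt (X : {set T}) : R := (\sum_(x in X) w x)%R.

(* Written as a max-fold starting from 0; since weights are nonnegative
   and A itself is admissible when A \subset S (S even, hence stable),
   this is exactly the maximum. *)
Definition alphaAS (A S : {set T}) : R :=
  (\big[Num.max/0]_(I : {set T} | stable I && (I :&: S == A)) wt I)%R.

End Graphs.

(* Main.v *)
Require Import Defs.
From mathcomp Require Import all_boot all_order all_algebra.
From mathcomp Require Import zify lra.
From Stdlib Require Import Classical.
Import Order.TTheory GRing.Theory Num.Theory.
Import Order.TTheory GRing.Theory Num.Theory.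
Set Implicit Arguments.

Lemma last_take_nth (T : Type) (x : T) (q : seq T) i :
  i <= size q -> last x (take i q) = nth x (x :: q) i.
Proof.
move=> hi; rewrite (last_nth x) size_take.
have -> : (if i < size q then i else size q) = i.
  by case: ltnP => // h; apply/eqP; rewrite eqn_leq hi h.
have -> : x :: take i q = take i.+1 (x :: q) by [].
by rewrite nth_take.
Qed.

Lemma splice_eq (T : Type) (r : rel T) x q i j :
  path r x q -> i < j -> j <= size q -> nth x (x :: q) i = nth x (x :: q) j ->
  [/\ path r x (take i q ++ drop j q), last x (take i q ++ drop j q) = last x q
   & size (take i q ++ drop j q) < size q].
Proof.
move=> hp hij hj heq.
have hl : last x (take i q) = last x (take j q).
  by rewrite !last_take_nth // (leq_trans (ltnW hij)).
split.
- rewrite cat_path hl.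
  have := hp; rewrite -{1}(cat_take_drop i q) cat_path => /andP[-> _] /=.
  by move: hp; rewrite -{1}(cat_take_drop j q) cat_path => /andP[_ ->].
- by rewrite last_cat hl -last_cat cat_take_drop.
- rewrite size_cat size_take_min size_drop.
  lia.
Qed.

Lemma splice_adj (T : Type) (r : rel T) x q i k :
  path r x q -> i < k -> k < size q -> r (nth x (x :: q) i) (nth x q k) ->
  [/\ path r x (take i q ++ drop k q), last x (take i q ++ drop k q) = last x q
   & size (take i q ++ drop k q) < size q].
Proof.
move=> hp hik hk hr.
have hi : i <= size q by lia.
have hk1 : last x (take k.+1 q) = nth x q k by rewrite last_take_nth.
rewrite (drop_nth x hk).
split.
- rewrite cat_path last_take_nth // /= hr.
  have := hp; rewrite -{1}(cat_take_drop i q) cat_path => /andP[-> _] /=.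
  by move: hp; rewrite -{1}(cat_take_drop k.+1 q) cat_path hk1 => /andP[_ ->].
- rewrite last_cat /= -hk1 -last_cat cat_take_drop //.
- rewrite size_cat /= size_take_min size_drop.
  lia.
Qed.
Unset Implicit Arguments.

Section Ind.
Variable T : finType.
Variable e : rel T.
Hypothesis esym : symmetric e.
Hypothesis eirr : irreflexive e.
Variable D : {set T}.
Definition rr := fun u v : T => [&& u \in D, v \in D & e u v].

Lemma memD x q m : path rr x q -> 0 < size q -> m <= size q ->
  nth x (x :: q) m \in D.
Proof.
move=> /(pathP x) hp hq hm.
case: (ltnP m (size q)) => h.
  by have /and3P[] := hp m h.
have -> : m = (size q).-1.+1 by lia.
have /and3P[_ + _] := hp (size q).-1 ltac:(lia).
by [].
Qed.

Lemma noadj x q i j : path rr x q ->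
  (forall q', path rr x q' -> last x q' = last x q -> size q <= size q') ->
  i.+1 < j -> j <= size q -> ~~ e (nth x (x :: q) i) (nth x (x :: q) j).
Proof.
move=> hp hmin hij hj; apply/negP => he.
have hk : j.-1 < size q by lia.
have hjk : nth x (x :: q) j = nth x q j.-1 by case: j hij {hj hk he} => // j.
have hr : rr (nth x (x :: q) i) (nth x q j.-1).
  rewrite /rr -hjk !memD //; lia.
have [h1 h2 h3] := @splice_adj _ _ _ _ i j.-1 hp ltac:(lia) hk hr.
by have := hmin _ h1 h2; rewrite leqNgt h3.
Qed.

Lemma min_induced x q : path rr x q ->
  (forall q', path rr x q' -> last x q' = last x q -> size q <= size q') ->
  induced_path e x (last x q) q.
Proof.
move=> hp hmin; rewrite /induced_path eqxx andTb.
apply/andP; split.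
  apply: contraT => hu; have [i [j [hij hj heq]]] := elimT (uniqPn x) hu.
  have [h1 h2 h3] := @splice_eq _ _ _ _ i j hp hij ltac:(simpl in hj; lia) heq.
  by have := hmin _ h1 h2; rewrite leqNgt h3.
apply/forallP => i; apply/forallP => j.
have hi := ltn_ord i; have hj := ltn_ord j; simpl in hi, hj.
case: (eqVneq (i.+1 : nat) j) => [hij|hij] /=.
  have hi' : (i : nat) < size q by rewrite -ltnS hij.
  rewrite -hij /=; apply/eqP.
  by have /and3P[_ _ ->] := (pathP x hp) i hi'.
case: (eqVneq (j.+1 : nat) i) => [hji|hji] /=.
  have hj' : (j : nat) < size q by rewrite -ltnS hji.
  rewrite -hji /=; apply/eqP; rewrite esym.
  by have /and3P[_ _ ->] := (pathP x hp) j hj'.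
apply/eqP/negbTE.
case: (ltngtP i j) => h.
- by apply: noadj => //; rewrite ltn_neqAle hij h.
- by rewrite esym; apply: noadj => //; rewrite ltn_neqAle hji h.
- by rewrite h eirr.
Qed.

End Ind.

Lemma exists_min (T : Type) (r : rel T) x q : path r x q ->
  exists q0, [/\ path r x q0, last x q0 = last x q &
    forall q', path r x q' -> last x q' = last x q -> size q0 <= size q'].
Proof.
move: {2}(size q) (leqnn (size q)) => n; elim: n q => [|n IH] q hn hp.
  exists q; split => // q' _ _; by rewrite leqn0 in hn; rewrite (eqP hn).
case: (classic (forall q', path r x q' -> last x q' = last x q -> size q <= size q')) => H.
  by exists q.
have [q' hq'] : exists q', ~ (path r x q' -> last x q' = last x q -> size q <= size q').
  by apply: not_all_ex_not.
have hp' : path r x q' by apply: NNPP => h; apply: hq' => /h.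
have hl' : last x q' = last x q by apply: NNPP => h; apply: hq' => _ /h.
have hs' : size q' < size q by rewrite ltnNge; apply/negP => h; apply: hq'.
have [q0 [h1 h2 h3]] := IH q' ltac:(lia) hp'.
exists q0; split => //; first by rewrite h2.
by move=> q'' hp'' hl''; apply: h3; rewrite // hl''.
Qed.

Lemma parity (T : Type) (r : rel T) (s : pred T) :
  (forall u v, r u v -> s u != s v) -> forall x q, path r x q ->
  s (last x q) = s x (+) odd (size q).
Proof.
move=> hr x q; elim: q x => [|y q IH] x /=; first by rewrite addbF.
move=> /andP[hxy hp]; rewrite IH //.
have : s y = ~~ s x by move: (hr _ _ hxy); case: (s x); case: (s y).
by move=> ->; rewrite addNb addbN.
Qed.

Local Open Scope ring_scope.

Lemma stableP (T : finType) (e : rel T) (I : {set T}) x y :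
  stable e I -> x \in I -> y \in I -> ~~ e x y.
Proof. by move=> /forall_inP /(_ x) H hx hy; move: (H hx) => /forall_inP; apply. Qed.

Lemma stable_intro (T : finType) (e : rel T) (I : {set T}) :
  (forall x y, x \in I -> y \in I -> ~~ e x y) -> stable e I.
Proof. by move=> H; apply/forall_inP => x hx; apply/forall_inP => y hy; apply: H. Qed.

Lemma even_stable (T : finType) (e : rel T) (S : {set T}) :
  simple_graph e -> even_set e S -> stable e S.
Proof.
move=> [esym eirr] hS; apply: stable_intro => x y hx hy.
case: (eqVneq x y) => [->|hxy]; first by rewrite eirr.
apply/negP => he.
have : induced_path e x y [:: y].
  rewrite /induced_path /= eqxx inE hxy /=.
  apply/forallP => i; apply/forallP => j.
  case: i j => [[|[|i]] hi] [[|[|j]] hj] //=; by rewrite ?eirr ?he ?(esym y x) ?he.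
by move/(hS x y hx hy hxy).
Qed.

Lemma alpha_ge (T : finType) (e : rel T) (R : realFieldType) (w : T -> R) (S X J : {set T}) :
  stable e J -> J :&: S == X -> wt w J <= alphaAS e w X S.
Proof.
move=> h1 h2; rewrite /alphaAS.
by apply: (le_bigmax_cond _ (fun I => wt w I)); rewrite h1 h2.
Qed.

Lemma alpha_attain (T : finType) (e : rel T) (R : realFieldType) (w : T -> R) (S A : {set T}) :
  simple_graph e -> even_set e S -> (forall v, 0 <= w v) -> A \subset S ->
  exists I, [/\ stable e I, I :&: S == A & alphaAS e w A S <= wt w I].
Proof.
move=> hg hS hw hA.
have hAst : stable e A.
  apply: stable_intro => x y hx hy.
  exact: (stableP _ _ _ _ _ (even_stable _ _ _ hg hS) (subsetP hA _ hx) (subsetP hA _ hy)).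
have hAA : A :&: S == A by apply/eqP/setIidPl.
pose P := fun a : R => a = 0 \/ exists I, [/\ stable e I, I :&: S == A & a = wt w I].
have : P (alphaAS e w A S).
  rewrite /alphaAS; apply: big_ind.
  - by left.
  - move=> a b ha hb; case: (leP a b) => _; by [].
  - move=> I /andP[h1 h2]; right; by exists I.
case=> [h0|[I [h1 h2 h3]]]; last by exists I; rewrite h3.
exists A; split => //; rewrite h0 /wt; apply: sumr_ge0 => v _; exact: hw.
Qed.

Lemma stable_mix (T : finType) (e : rel T) (D X P Q : {set T}) :
  symmetric e -> stable e P -> stable e Q ->
  (forall v, v \in P -> v \notin Q -> v \in D) ->
  (forall v, v \in Q -> v \notin P -> v \in D) ->
  (forall u v, u \in X -> rr _ e D u v -> v \in X) ->
  stable e [set v | if v \in X then v \in P else v \in Q].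
Proof.
move=> esym hP hQ hD1 hD2 hX.
have key : forall x y, x \in X -> y \notin X -> x \in P -> y \in Q -> ~~ e x y.
  move=> x y hx hy xP yQ; apply/negP => he.
  have xQ : x \notin Q.
    by apply/negP => xQ; move: (stableP _ _ _ _ _ hQ xQ yQ); rewrite he.
  have yP : y \notin P.
    by apply/negP => yP; move: (stableP _ _ _ _ _ hP xP yP); rewrite he.
  have : rr _ e D x y by rewrite /rr hD1 // hD2.
  by move/(hX _ _ hx); rewrite (negbTE hy).
apply: stable_intro => x y; rewrite !inE.
case hx: (x \in X); case hy: (y \in X) => hx' hy'.
- exact: (stableP _ _ _ _ _ hP).
- by apply: key; rewrite ?hy.
- by rewrite esym; apply: key; rewrite ?hx.
- exact: (stableP _ _ _ _ _ hQ).
Qed.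

Theorem lemma2p2 (T : finType) (e : rel T) (R : realFieldType) (w : T -> R)
  (S : {set T}) :
  simple_graph e ->
  (forall v, 0 <= w v <= 1) ->
  even_set e S ->
  let f := fun A : {set T} => - alphaAS e w A S in
  forall A B : {set T}, A \subset S -> B \subset S ->
    f A + f B >= f (A :|: B) + f (A :&: B).
Proof.
move=> hg hw1 hS f A B hA hB; rewrite /f.
have hw : forall v, 0 <= w v by move=> v; case/andP: (hw1 v).
have [esy eirr] := hg.
have [IA [sA iA aA]] := alpha_attain _ _ _ w _ _ hg hS hw hA.
have [IB [sB iB aB]] := alpha_attain _ _ _ w _ _ hg hS hw hB.
have mA : forall v, v \in S -> (v \in IA) = (v \in A).
  by move=> v vS; move/eqP/setP: iA => /(_ v); rewrite inE vS andbT.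
have mB : forall v, v \in S -> (v \in IB) = (v \in B).
  by move=> v vS; move/eqP/setP: iB => /(_ v); rewrite inE vS andbT.
pose D := (IA :\: IB) :|: (IB :\: IA).
pose X := [set v | [exists b in B :\: A, connect (rr _ e D) b v]].
have hX : forall u v, u \in X -> rr _ e D u v -> v \in X.
  move=> u v; rewrite !inE => /exists_inP [b hb hc] huv.
  by apply/exists_inP; exists b => //; apply: connect_trans hc (connect1 huv).
have BX : forall v, v \in B -> v \notin A -> v \in X.
  by move=> v vB vA; rewrite inE; apply/exists_inP; exists v; rewrite ?inE ?vB ?vA.
have AX : forall v, v \in A -> v \notin B -> v \notin X.
  move=> a aA0 aB0; rewrite inE; apply/negP => /exists_inP [b]; rewrite inE.
  move=> /andP[bA bB] /connectP [p hp hl].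
  have [q0 [h1 h2 h3]] := exists_min _ _ _ _ hp.
  have hi := min_induced _ _ esy eirr _ _ _ h1 (fun q' hq' hl' => h3 q' hq' (etrans hl' h2)).
  rewrite h2 -hl in hi.
  have bS := subsetP hB _ bB; have aS := subsetP hA _ aA0.
  have hba : b != a by apply/negP => /eqP hba; move: aB0; rewrite -hba bB.
  have := hS b a bS aS hba q0 hi.
  have hpar : forall u v, rr _ e D u v -> (u \in IA) != (v \in IA).
    move=> u v /and3P[uD vD he]; move: uD vD; rewrite /D !inE.
    case uA: (u \in IA); case vA: (v \in IA) => //=; rewrite ?andbF ?andbT /= => uB vB.
      by move: (stableP _ _ _ _ _ sA uA vA); rewrite he.
    by move: (stableP _ _ _ _ _ sB uB vB); rewrite he.
  have := parity _ _ _ hpar _ _ h1; rewrite h2 -hl (mA _ aS) (mA _ bS) aA0 (negbTE bA).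
  by move=> /= <-.
clearbody X.
pose J1 := [set v | if v \in X then v \in IB else v \in IA].
pose J2 := [set v | if v \in X then v \in IA else v \in IB].
have sJ1 : stable e J1.
  apply: (stable_mix _ _ D) => // v; rewrite /D !inE => -> ->; by rewrite ?orbT.
have sJ2 : stable e J2.
  apply: (stable_mix _ _ D) => // v; rewrite /D !inE => -> ->; by rewrite ?orbT.
have iJ1 : J1 :&: S == A :|: B.
  apply/eqP/setP => v; rewrite !inE.
  case vS: (v \in S); last first.
    rewrite andbF; apply/esym/negbTE; rewrite negb_or.
    by apply/andP; split; apply/negP => /(subsetP _) h; rewrite ?h in vS.
  rewrite andbT (mA _ vS) (mB _ vS).
  case vX: (v \in X); case vA: (v \in A); case vB: (v \in B) => //=.
    by move: (AX v); rewrite vA vB vX => /(_ isT isT).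
  by move: (BX v); rewrite vA vB vX => /(_ isT isT).
have iJ2 : J2 :&: S == A :&: B.
  apply/eqP/setP => v; rewrite !inE.
  case vS: (v \in S); last first.
    rewrite andbF; apply/esym/negbTE; rewrite negb_and.
    by apply/orP; left; apply/negP => /(subsetP hA) h; rewrite h in vS.
  rewrite andbT (mA _ vS) (mB _ vS).
  case vX: (v \in X); case vA: (v \in A); case vB: (v \in B) => //=.
    by move: (AX v); rewrite vA vB vX => /(_ isT isT).
  by move: (BX v); rewrite vA vB vX => /(_ isT isT).
have wJ : wt w J1 + wt w J2 = wt w IA + wt w IB.
  rewrite /wt !(big_mkcond (fun x => x \in _)) -!big_split /=.
  apply: eq_bigr => v _; rewrite !inE.
  case: (v \in X); case: (v \in IA); case: (v \in IB); rewrite /= ?addr0 ?add0r //.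
have g1 := alpha_ge _ _ _ w _ _ _ sJ1 iJ1.
have g2 := alpha_ge _ _ _ w _ _ _ sJ2 iJ2.
lra.
Qed.
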